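(* For every integer $j\geq 3$, the limit $\lim_{t\to-1}g_j(t)$ exists and is strictly negative.
   Context: $\omega_j$ is the surface area of $\mathbb{S}^{j-1}\subseteq\mathbb{R}^j$. The Berg functions $g_j\in C^\infty(-1,1)$, $j\ge2$, are defined by $g_2(t)=\frac{1}{2\pi}(\pi-\arccos t)(1-t^2)^{1/2}-\frac{1}{4\pi}t$, $g_3(t)=\frac{1}{2\pi}\big(1+t\log(1-t)+(\tfrac43-\log 2)t\big)$, $g_{j+2}(t)=\frac{j+1}{2\pi}g_j(t)+\frac{j+1}{2\pi(j-1)}t\,g_j'(t)+\frac{j+1}{2\pi\omega_j}t$. *)

(* Defs.v *)
From Stdlib Require Import Reals.
From Coquelicot Require Import Coquelicot.
Open Scope R_scope.

(* omega j = surface area of the unit sphere S^{j-1} in R^j, for j >= 1: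
   omega 1 = 2, omega 2 = 2*PI, omega (j+2) = 2*PI*omega j / j
   (equivalently omega j = 2 PI^{j/2} / Gamma(j/2)). omega 0 is a dummy value. *)
Fixpoint omega (j : nat) : R :=
  match j with
  | O => 0
  | S O => 2
  | S (S O) => 2 * PI
  | S (S k as m) => 2 * PI * omega k / INR k
  end.

Definition g2 (t : R) : R :=
  / (2 * PI) * (PI - acos t) * sqrt (1 - t ^ 2) - / (4 * PI) * t.

Definition g3 (t : R) : R :=
  / (2 * PI) * (1 + t * ln (1 - t) + (4 / 3 - ln 2) * t).

(* gk k = g_{k+2} (the Berg function of index k+2), via the recursion
   g_{j+2} = (j+1)/(2 PI) g_j + (j+1)/(2 PI (j-1)) t g_j' + (j+1)/(2 PI omega_j) t. *)
Fixpoint gk (k : nat) : R -> R :=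
  match k with
  | O => g2
  | S O => g3
  | S (S i) => fun t =>
      let j := INR (i + 2) in
      (j + 1) / (2 * PI) * gk i t
      + (j + 1) / (2 * PI * (j - 1)) * t * Derive (gk i) t
      + (j + 1) / (2 * PI * omega (i + 2)) * t
  end.

(* Berg function g_j, meaningful for j >= 2 and t in (-1,1). *)
Definition berg (j : nat) : R -> R := gk (j - 2).

(* Main.v *)
Require Import Defs.
From Stdlib Require Import Reals Lra Lia.
From Coquelicot Require Import Coquelicot.
Open Scope R_scope.

Definition R2 (a : nat -> R) : Prop := Rbar_le (Finite 2) (CV_radius a).

Lemma R2_of_disk (a : nat -> R) :
  (forall r, 0 <= r < 2 -> CV_disk a r) -> R2 a.
Proof.
  intros H. unfold R2.
  assert (Hub : forall r, 0 <= r < 2 -> Rbar_le (Finite r) (CV_radius a)).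
  { intros r Hr. unfold CV_radius.
    destruct (Lub_Rbar_correct (CV_disk a)) as [Hu _].
    apply Hu. now apply H. }
  pose proof (CV_radius_ge_0 a) as H0.
  destruct (CV_radius a) as [R| |] eqn:E; simpl in *; try tauto.
  destruct (Rle_lt_dec 2 R) as [h|h]; auto.
  exfalso. assert (Hr := Hub ((R+2)/2) ltac:(lra)). simpl in Hr. lra.
Qed.

Lemma R2_lt (a : nat -> R) x : R2 a -> Rabs x < 2 -> Rbar_lt (Finite (Rabs x)) (CV_radius a).
Proof.
  unfold R2; intros H Hx. destruct (CV_radius a); simpl in *; auto; lra.
Qed.

Lemma R2_ex (a : nat -> R) x : R2 a -> Rabs x < 2 -> ex_pseries a x.
Proof. intros; apply CV_radius_inside; now apply R2_lt. Qed.

Lemma R2_ext a b : (forall n, a n = b n) -> R2 a -> R2 b.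
Proof. unfold R2; intros H; now rewrite (CV_radius_ext a b H). Qed.

Lemma R2_plus a b : R2 a -> R2 b -> R2 (PS_plus a b).
Proof.
  unfold R2; intros Ha Hb. eapply Rbar_le_trans; [|apply CV_radius_plus].
  apply Rbar_min_case_strong; auto.
Qed.

Lemma R2_scal c a : c <> 0 -> R2 a -> R2 (PS_scal c a).
Proof. unfold R2; intros Hc H; now rewrite CV_radius_scal. Qed.

Lemma R2_incr a : R2 a -> R2 (PS_incr_1 a).
Proof. unfold R2; now rewrite CV_radius_incr_1. Qed.

Lemma R2_derive a : R2 a -> R2 (PS_derive a).
Proof. unfold R2; now rewrite CV_radius_derive. Qed.

Lemma R2_opp a : R2 a -> R2 (PS_opp a).
Proof. unfold R2; now rewrite CV_radius_opp. Qed.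

Lemma R2_minus a b : R2 a -> R2 b -> R2 (PS_minus a b).
Proof. intros; apply R2_plus; auto; now apply R2_opp. Qed.

Definition poly2 (al be : R) (n : nat) : R :=
  match n with O => al | S O => be | _ => 0 end.

Lemma poly2_radius al be : CV_radius (poly2 al be) = p_infty.
Proof.
  rewrite <- CV_radius_decr_1, <- CV_radius_decr_1.
  rewrite <- CV_radius_const_0. apply CV_radius_ext. intros n. reflexivity.
Qed.

Lemma R2_poly2 al be : R2 (poly2 al be).
Proof. unfold R2; rewrite poly2_radius; simpl; auto. Qed.

Lemma PSeries_poly2 al be x : PSeries (poly2 al be) x = al + be * x.
Proof.
  rewrite PSeries_decr_1.
  2:{ apply CV_radius_inside. rewrite poly2_radius. simpl; auto. }
  rewrite PSeries_decr_1.
  2:{ apply CV_radius_inside. rewrite CV_radius_decr_1, poly2_radius. simpl; auto. }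
  rewrite (PSeries_ext _ (fun _ => 0)) by (intros; reflexivity).
  rewrite PSeries_const_0. unfold PS_decr_1; simpl; ring.
Qed.

Lemma disk_geom_bound (a : nat -> R) :
  (forall n, Rabs (a n) <= (/2)^n) -> R2 a.
Proof.
  intros H. apply R2_of_disk. intros r Hr.
  unfold CV_disk. apply (@ex_series_le R_AbsRing R_CompleteNormedModule _ (fun n => (r/2)^n)).
  - intros n. change (norm (Rabs (a n * r ^ n))) with (Rabs (Rabs (a n * r ^ n))).
    rewrite Rabs_Rabsolu, Rabs_mult, <- RPow_abs, (Rabs_right r) by lra.
    unfold Rdiv. rewrite Rpow_mult_distr.
    rewrite (Rmult_comm (r^n)). apply Rmult_le_compat_r; auto.
    apply pow_le; lra.
  - apply ex_series_geom. rewrite Rabs_right; lra.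
Qed.

Definition rr (j : R) (n : nat) : R :=
  match n with O => j*(j-1) | S O => -(j*(j-1)) | _ => 0 end.
Definition ODEc (j : R) (a : nat -> R) : Prop :=
  forall n, (INR n + 1)*(2*INR n + j - 1)* a (S n)
            = (INR n - 1)*(INR n + j - 1)* a n + rr j n.
Definition stepseq (j : R) (a : nat -> R) (n : nat) : R :=
  (j+1)/j * (a n + (INR n * a n - INR (S n) * a (S n))/(j-1))
  + (j+1)/j * poly2 (-1) 1 n.

Lemma ODE_step_gen j a n (N : R) : 1 < j -> 0 <= N -> INR n = N ->
  (N + 1)*(2*N + j - 1)* a (S n) = (N - 1)*(N + j - 1)* a n + rr j n ->
  (N + 2)*(2*N + j + 1)* a (S (S n)) = N*(N + j)* a (S n) + rr j (S n) ->
  (N + 1)*(2*N + (j+2) - 1)* stepseq j a (S n)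
   = (N - 1)*(N + (j+2) - 1)* stepseq j a n + rr (j+2) n.
Proof.
  intros Hj HN HNn H0 H1.
  assert (E1 : a (S n) = ((N - 1)*(N + j - 1)* a n + rr j n)/((N + 1)*(2*N + j - 1))).
  { rewrite <- H0. field. split; nra. }
  assert (E2 : a (S (S n)) = (N*(N + j)* a (S n) + rr j (S n))/((N + 2)*(2*N + j + 1))).
  { rewrite <- H1. field. split; nra. }
  unfold stepseq. rewrite !S_INR, HNn, E2, E1.
  destruct n as [|[|m]]; simpl rr; simpl poly2; try (field; repeat split; nra).
  - simpl in HNn. subst N. field; repeat split; nra.
  - simpl in HNn. rewrite <- HNn. field. repeat split; nra.
Qed.

Lemma ODE_step j a : 1 < j -> ODEc j a -> ODEc (j+2) (stepseq j a).
Proof.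
  intros Hj H n.
  pose proof (H (S n)) as H1. rewrite S_INR in H1.
  replace (INR n + 1 + 1) with (INR n + 2) in H1 by ring.
  replace (2 * (INR n + 1) + j - 1) with (2 * INR n + j + 1) in H1 by ring.
  replace (INR n + 1 - 1) with (INR n) in H1 by ring.
  replace (INR n + 1 + j - 1) with (INR n + j) in H1 by ring.
  exact (ODE_step_gen j a n (INR n) Hj (pos_INR n) eq_refl (H n) H1).
Qed.

Lemma omega_SS k : (1 <= k)%nat -> omega (S (S k)) = 2*PI*omega k/INR k.
Proof. intros H. destruct k as [|k]; [lia|reflexivity]. Qed.

Lemma omega_pos j : (1 <= j)%nat -> 0 < omega j.
Proof.
  assert (H : forall k, 0 < omega (S k) /\ 0 < omega (S (S k))).
  { induction k as [|k [IH1 IH2]].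
    - simpl. split; [lra|]. pose proof PI_RGT_0; lra.
    - split; auto. rewrite omega_SS by lia.
      pose proof PI_RGT_0. pose proof (lt_0_INR (S k) ltac:(lia)).
      apply Rdiv_lt_0_compat; auto. nra. }
  intros Hj. destruct j; [lia|]. apply H.
Qed.

Definition combo (j : R) (a : nat -> R) : nat -> R :=
  PS_plus (PS_scal ((j+1)/j) a)
   (PS_plus (PS_scal ((j+1)/j/(j-1)) (PS_minus (PS_incr_1 (PS_derive a)) (PS_derive a)))
            (PS_scal ((j+1)/j) (poly2 (-1) 1))).

Lemma combo_eq j a n : 1 < j -> stepseq j a n = combo j a n.
Proof.
  intros Hj. unfold stepseq, combo, PS_plus, PS_scal, PS_minus, PS_incr_1, PS_derive.
  change (@plus R_NormedModule) with Rplus.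
  change (@scal R_AbsRing R_NormedModule) with Rmult.
  change (@opp R_NormedModule) with Ropp.
  destruct n as [|n].
  - change (@zero R_NormedModule) with 0. simpl. field. lra.
  - rewrite (S_INR (S n)). field. lra.
Qed.

Lemma R2_stepseq j a : 1 < j -> R2 a -> R2 (stepseq j a).
Proof.
  intros Hj Ha. apply (R2_ext (combo j a)); [intros n; symmetry; now apply combo_eq|].
  unfold combo.
  assert (Hk : (j+1)/j <> 0) by (apply Rgt_not_eq, Rdiv_lt_0_compat; lra).
  assert (Hk2 : (j+1)/j/(j-1) <> 0) by (apply Rgt_not_eq, Rdiv_lt_0_compat; [apply Rdiv_lt_0_compat|]; lra).
  apply R2_plus; [apply R2_scal; auto|].
  apply R2_plus; apply R2_scal; auto.
  - apply R2_minus; [apply R2_incr|]; now apply R2_derive.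
  - apply R2_poly2.
Qed.

Lemma PSeries_step j a x : 1 < j -> R2 a -> Rabs x < 2 ->
  PSeries (stepseq j a) x = (j+1)/j * PSeries a x
    + (j+1)/j/(j-1) * (x-1) * PSeries (PS_derive a) x + (j+1)/j * (x - 1).
Proof.
  intros Hj Ha Hx.
  rewrite (PSeries_ext _ (combo j a)) by (intros; now apply combo_eq).
  unfold combo.
  assert (Hd : R2 (PS_derive a)) by now apply R2_derive.
  assert (Hi : R2 (PS_incr_1 (PS_derive a))) by now apply R2_incr.
  rewrite PSeries_plus.
  2: apply ex_pseries_scal; [apply Rmult_comm| now apply R2_ex].
  2: { apply ex_pseries_plus; apply ex_pseries_scal; try apply Rmult_comm.
       - apply (R2_ex _ x); auto. now apply R2_minus.
       - apply (R2_ex _ x); auto. apply R2_poly2. }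
  rewrite PSeries_plus.
  2: { apply ex_pseries_scal; try apply Rmult_comm.
       apply (R2_ex _ x); auto. now apply R2_minus. }
  2: { apply ex_pseries_scal; try apply Rmult_comm. apply (R2_ex _ x); auto. apply R2_poly2. }
  rewrite !PSeries_scal, PSeries_minus by (apply R2_ex; auto).
  rewrite PSeries_incr_1, PSeries_poly2. ring.
Qed.

Definition Inv (i : nat) : Prop :=
  exists a, R2 a /\
    (forall t, -1 < t < 1 -> omega (i+2) * gk i t = PSeries a (t+1)) /\
    ODEc (INR (i+2)) a /\ a O < 1 /\ ((1 <= i)%nat -> a O < 0).

Lemma gk_SS i t : gk (S (S i)) t =
  (INR (i+2) + 1)/(2*PI) * gk i t
  + (INR (i+2) + 1)/(2*PI*(INR (i+2) - 1)) * t * Derive (gk i) t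
  + (INR (i+2) + 1)/(2*PI*omega (i+2)) * t.
Proof. reflexivity. Qed.

Lemma loc_int t : -1 < t < 1 -> locally t (fun s => -1 < s < 1).
Proof.
  intros Ht.
  assert (Hp : 0 < Rmin (t+1) (1-t)) by (apply Rmin_glb_lt; lra).
  exists (mkposreal _ Hp). intros s Hs.
  change (Rabs (s - t) < Rmin (t+1) (1-t)) in Hs.
  pose proof (Rmin_l (t+1) (1-t)). pose proof (Rmin_r (t+1) (1-t)).
  apply Rabs_def2 in Hs. lra.
Qed.

Lemma Derive_shift a t : R2 a -> -1 < t < 1 ->
  Derive (fun s => PSeries a (s+1)) t = PSeries (PS_derive a) (t+1).
Proof.
  intros Ha Ht. apply is_derive_unique.
  assert (H1 : is_derive (fun s : R => s + 1) t 1).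
  { auto_derive; auto; ring. }
  pose proof (is_derive_comp (PSeries a) (fun s => s+1) t _ _
    (is_derive_PSeries a (t+1) ltac:(apply R2_lt; auto; rewrite Rabs_right; lra)) H1) as H.
  simpl in H. change (scal 1 ?x) with (1 * x) in H. rewrite Rmult_1_l in H. exact H.
Qed.

Lemma Inv_step i : Inv i -> Inv (S (S i)).
Proof.
  intros [a [Ha [Hf [Ho [H0 H0']]]]].
  set (j := INR (i+2)).
  assert (Hj : 1 < j).
  { unfold j. rewrite plus_INR. simpl. pose proof (pos_INR i). lra. }
  assert (Hom : 0 < omega (i+2)) by (apply omega_pos; lia).
  exists (stepseq j a). split; [now apply R2_stepseq|]. split; [|split; [|split]].
  - intros t Ht.
    assert (HD : Derive (gk i) t = / omega (i+2) * PSeries (PS_derive a) (t+1)).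
    { rewrite (Derive_ext_loc _ (fun s => / omega (i+2) * PSeries a (s+1))).
      - rewrite Derive_scal. now rewrite Derive_shift.
      - generalize (loc_int t Ht). apply filter_imp. intros s Hs.
        rewrite <- Hf by auto. field. lra. }
    rewrite gk_SS, HD. fold j.
    rewrite PSeries_step; auto.
    2: { rewrite Rabs_right; lra. }
    replace (S (S i) + 2)%nat with (S (S (i+2))) by lia.
    rewrite omega_SS by lia. fold j.
    assert (Hg : gk i t = / omega (i+2) * PSeries a (t+1)).
    { rewrite <- Hf by auto. field. lra. }
    rewrite Hg. replace (t + 1 - 1) with t by ring.
    field. repeat split; try lra. pose proof PI_RGT_0; lra.
  - replace (INR (S (S i) + 2)) with (j + 2).
    2: { unfold j. rewrite !plus_INR, !S_INR. simpl. ring. }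
    now apply ODE_step.
  - assert (E := Ho O). simpl rr in E. simpl INR in E.
    unfold stepseq. simpl poly2. rewrite (S_INR 0). simpl INR.
    assert (Ha1 : a 1%nat = j - a O).
    { apply (Rmult_eq_reg_l (j-1)); [|lra]. 
      fold j in E. replace ((0 + 1) * (2 * 0 + j - 1) * a 1%nat) with ((j-1) * a 1%nat) in E by ring.
      rewrite E. ring. }
    rewrite Ha1.
    assert (0 < (j+1)/j) by (apply Rdiv_lt_0_compat; lra).
    assert (a O + (0 * a O - (0 + 1) * (j - a O)) / (j - 1) < 1).
    { apply (Rmult_lt_reg_r (j-1)); [lra|].
      field_simplify; [|lra]. nra. }
    nra.
  - intros _. 
    assert (E := Ho O). simpl rr in E. simpl INR in E.
    unfold stepseq. simpl poly2. rewrite (S_INR 0). simpl INR.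
    assert (Ha1 : a 1%nat = j - a O).
    { apply (Rmult_eq_reg_l (j-1)); [|lra]. 
      fold j in E. replace ((0 + 1) * (2 * 0 + j - 1) * a 1%nat) with ((j-1) * a 1%nat) in E by ring.
      rewrite E. ring. }
    rewrite Ha1.
    assert (0 < (j+1)/j) by (apply Rdiv_lt_0_compat; lra).
    assert (a O + (0 * a O - (0 + 1) * (j - a O)) / (j - 1) < 1).
    { apply (Rmult_lt_reg_r (j-1)); [lra|].
      field_simplify; [|lra]. nra. }
    nra.
Qed.

Fixpoint uu (n : nat) : R :=
  match n with O => 1 | S m => INR (S m) / (2 * INR (S m) + 1) * uu m end.

Lemma uu_bound n : 0 <= uu n <= (/2)^n.
Proof.
  induction n as [|n IH].
  - simpl. lra.
  - change (uu (S n)) with (INR (S n) / (2 * INR (S n) + 1) * uu n).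
    assert (H1 : 0 < INR (S n)) by (apply lt_0_INR; lia).
    assert (Hq : 0 <= INR (S n) / (2 * INR (S n) + 1) <= /2).
    { split. apply Rlt_le, Rdiv_lt_0_compat; lra.
      apply (Rmult_le_reg_r (2 * INR (S n) + 1)); [lra|].
      unfold Rdiv. rewrite Rmult_assoc, Rinv_l by lra. lra. }
    simpl pow. split; [nra|]. 
    apply Rmult_le_compat; lra.
Qed.

Lemma R2_uu : R2 uu.
Proof.
  apply disk_geom_bound. intros n. destruct (uu_bound n).
  rewrite Rabs_right; lra.
Qed.

Ltac r2 := match goal with
 | |- R2 (PS_plus _ _) => apply R2_plus; r2
 | |- R2 (PS_minus _ _) => apply R2_minus; r2
 | |- R2 (PS_scal _ _) => apply R2_scal; [lra|r2]
 | |- R2 (PS_incr_1 _) => apply R2_incr; r2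
 | |- R2 (PS_derive _) => apply R2_derive; r2
 | |- R2 (poly2 _ _) => apply R2_poly2
 | |- _ => assumption
end.

Definition wcomb : nat -> R :=
  PS_minus (PS_plus (PS_scal 2 (PS_incr_1 (PS_derive uu))) uu)
           (PS_plus (PS_incr_1 (PS_incr_1 (PS_derive uu))) (PS_incr_1 uu)).

Lemma wcomb_eq n : wcomb n = poly2 1 0 n.
Proof.
  unfold wcomb, PS_plus, PS_scal, PS_minus, PS_incr_1, PS_derive.
  change (@plus R_NormedModule) with Rplus.
  change (@scal R_AbsRing R_NormedModule) with Rmult.
  change (@opp R_NormedModule) with Ropp.
  change (@zero R_NormedModule) with 0.
  destruct n as [|[|m]].
  - simpl. ring.
  - simpl. field.
  - simpl poly2. 
    change (uu (S (S m))) with (INR (S (S m)) / (2 * INR (S (S m)) + 1) * uu (S m)).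
    rewrite !S_INR. assert (0 <= INR m) by apply pos_INR.
    field. lra.
Qed.

Lemma uu_id x : Rabs x < 2 ->
  x * (2 - x) * PSeries (PS_derive uu) x = 1 + (x - 1) * PSeries uu x.
Proof.
  intros Hx.
  assert (Hd : R2 (PS_derive uu)) by apply (R2_derive _ R2_uu).
  assert (E : PSeries wcomb x = 1).
  { rewrite (PSeries_ext _ _ _ wcomb_eq), PSeries_poly2. ring. }
  unfold wcomb in E.
  rewrite PSeries_minus, !PSeries_plus, PSeries_scal, !PSeries_incr_1 in E.
  - nra.
  all: apply (R2_ex _ x); [|exact Hx].
  all: pose proof R2_uu; r2.
Qed.

Lemma cont_ge (f : R -> R) : continuity_pt f (-1) ->
  (forall t, -1 < t < 1 -> 0 <= f t) -> 0 <= f (-1).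
Proof.
  intros Hc H. destruct (Rle_lt_dec 0 (f (-1))) as [h|h]; auto. exfalso.
  destruct (Hc (- f (-1) / 2) ltac:(lra)) as [alp [Halp Hd]].
  set (t := -1 + Rmin alp 1 / 2).
  assert (Hm : 0 < Rmin alp 1) by (apply Rmin_glb_lt; lra).
  assert (Hm1 := Rmin_l alp 1). assert (Hm2 := Rmin_r alp 1).
  assert (Ht : -1 < t < 1) by (unfold t; lra).
  assert (Hdist : R_dist t (-1) < alp).
  { unfold R_dist, t. rewrite Rabs_right; lra. }
  assert (Hx : D_x no_cond (-1) t).
  { split; [exact I|]. unfold t. lra. }
  specialize (Hd t (conj Hx Hdist)). simpl in Hd. unfold R_dist in Hd.
  apply Rabs_def2 in Hd. destruct Hd. specialize (H t Ht). lra.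
Qed.

Lemma cont_eq0 (f : R -> R) : continuity_pt f (-1) ->
  (forall t, -1 < t < 1 -> f t = 0) -> f (-1) = 0.
Proof.
  intros Hc H.
  assert (A := cont_ge f Hc ltac:(intros t Ht; rewrite H; lra)).
  assert (B := cont_ge (fun t => - f t) ltac:(apply continuity_pt_opp; auto)
     ltac:(intros t Ht; cbv beta; rewrite H; lra)).
  simpl in B. lra.
Qed.

Definition Vf (t : R) : R := sqrt (1 - t^2) * PSeries uu (t+1).

Lemma is_derive_shift a t : R2 a -> -1 < t < 1 ->
  is_derive (fun s => PSeries a (s+1)) t (PSeries (PS_derive a) (t+1)).
Proof.
  intros Ha Ht.
  assert (H1 : is_derive (fun s : R => s + 1) t 1).
  { auto_derive; auto; ring. }
  pose proof (is_derive_comp (PSeries a) (fun s => s+1) t _ _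
    (is_derive_PSeries a (t+1) ltac:(apply R2_lt; auto; rewrite Rabs_right; lra)) H1) as H.
  simpl in H. change (scal 1 ?x) with (1 * x) in H. rewrite Rmult_1_l in H. exact H.
Qed.

Lemma Vf_derive t : -1 < t < 1 -> is_derive Vf t (/ sqrt (1 - t^2)).
Proof.
  intros Ht.
  assert (Hs : 0 < 1 - t^2) by nra.
  assert (Hsq : 0 < sqrt (1 - t^2)) by (apply sqrt_lt_R0; auto).
  assert (H1 : is_derive (fun s => sqrt (1 - s^2)) t (- t / sqrt (1 - t^2))).
  { auto_derive; [nra|]. replace (1 + - (t * (t * 1))) with (1 - t^2) by ring. field. lra. }
  assert (H2 := is_derive_shift uu t R2_uu Ht).
  apply is_derive_Reals in H1. apply is_derive_Reals in H2.
  assert (H := derivable_pt_lim_mult _ _ t _ _ H1 H2).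
  apply is_derive_Reals.
  replace (/ sqrt (1 - t^2)) with (- t / sqrt (1 - t ^ 2) * PSeries uu (t + 1) + sqrt (1 - t ^ 2) * PSeries (PS_derive uu) (t + 1)).
  - exact H.
  - assert (Hid := uu_id (t+1) ltac:(rewrite Rabs_right; lra)).
    replace (t + 1 - 1) with t in Hid by ring.
    replace ((t + 1) * (2 - (t + 1))) with (1 - t^2) in Hid by ring.
    rewrite <- (sqrt_sqrt (1 - t^2)) in Hid by lra.
    assert (E : sqrt (1 - t ^ 2) * PSeries (PS_derive uu) (t + 1) = (1 + t * PSeries uu (t + 1)) / sqrt (1 - t^2)).
    { rewrite <- Hid. field. lra. }
    rewrite E. field. lra.
Qed.

Lemma theta_derive t : -1 < t < 1 -> is_derive (fun s => PI - acos s) t (/ sqrt (1 - t^2)).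
Proof.
  intros Ht.
  assert (Ha : derivable_pt_lim acos t (-1 / sqrt (1 - t²))).
  { apply (derive_pt_eq_1 _ _ _ (derivable_pt_acos t Ht)). apply derive_pt_acos. }
  assert (H := derivable_pt_lim_minus (fun _ => PI) acos t 0 _ (derivable_pt_lim_const PI t) Ha).
  apply is_derive_Reals.
  replace (t^2) with (t²) by (unfold Rsqr; ring).
  replace (/ sqrt (1 - t²)) with (0 - (-1 / sqrt (1 - t²))).
  - exact H.
  - field. apply Rgt_not_eq, sqrt_lt_R0. unfold Rsqr. nra.
Qed.

Lemma theta_eq_V t : -1 < t < 1 -> PI - acos t = Vf t.
Proof.
  set (C := PI - acos 0 - Vf 0).
  assert (HC : forall t, -1 < t < 1 -> PI - acos t = Vf t + C).
  { intros s Hs.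
    set (h := fun y => (PI - acos y) - Vf y).
    assert (Hd : forall y, -1 < y < 1 -> is_derive h y zero).
    { intros y Hy. unfold h.
      replace (@zero R_NormedModule) with (/ sqrt (1 - y^2) - / sqrt (1 - y^2))
        by (change (@zero R_NormedModule) with 0; ring).
      apply (is_derive_minus _ _ y _ _ (theta_derive y Hy) (Vf_derive y Hy)). }
    assert (h s = h 0).
    { destruct (Rtotal_order 0 s) as [Hlt|[Heq|Hgt]].
      - symmetry. apply eq_is_derive; auto. intros y Hy; apply Hd; lra.
      - subst; auto.
      - apply eq_is_derive; auto. intros y Hy; apply Hd; lra. }
    unfold h, C in *. lra. }
  assert (HV : Vf (-1) = 0).
  { unfold Vf. replace (1 - (-1)^2) with 0 by ring. rewrite sqrt_0. ring. }
  assert (HVc : continuity_pt Vf (-1)).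
  { unfold Vf. apply continuity_pt_mult.
    - apply (continuity_pt_comp (fun s => 1 - s^2) sqrt).
      + reg.
      + apply continuity_pt_sqrt. lra.
    - apply (continuity_pt_comp (fun s => s + 1) (PSeries uu)).
      + reg.
      + apply PSeries_continuity. apply R2_lt; [apply R2_uu|].
        replace (-1+1) with 0 by ring. rewrite Rabs_R0; lra. }
  assert (C1 : cos C = 1).
  { assert (E := cont_eq0 (fun s => cos (Vf s + C) + s)).
    simpl in E. rewrite HV in E.
    assert (cos (0 + C) + -1 = 0).
    { apply E.
      - apply continuity_pt_plus; [|apply continuity_pt_id].
        apply (continuity_pt_comp (fun s => Vf s + C) cos).
        + apply continuity_pt_plus; auto. apply continuity_pt_const. intros ? ?; auto.
        + apply continuity_cos.
      - intros s Hs. rewrite <- HC by auto.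
        rewrite cos_minus, cos_PI, sin_PI, cos_acos by lra. ring. }
    replace (0 + C) with C in H by ring. lra. }
  assert (C2 : 0 <= C).
  { assert (E := cont_ge (fun s => Vf s + C)).
    simpl in E. rewrite HV in E.
    assert (0 <= 0 + C).
    { apply E.
      - apply continuity_pt_plus; auto. apply continuity_pt_const. intros ? ?; auto.
      - intros s Hs. rewrite <- HC by auto. pose proof (acos_bound s). lra. }
    lra. }
  assert (C3 : C <= PI).
  { assert (E := cont_ge (fun s => PI - (Vf s + C))).
    simpl in E. rewrite HV in E.
    assert (0 <= PI - (0 + C)).
    { apply E.
      - apply continuity_pt_minus. apply continuity_pt_const. intros ? ?; auto.
        apply continuity_pt_plus; auto. apply continuity_pt_const. intros ? ?; auto.
      - intros s Hs. rewrite <- HC by auto. pose proof (acos_bound s). lra. }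
    lra. }
  assert (C0 : C = 0).
  { rewrite <- (acos_cos C) by lra. rewrite C1. apply acos_1. }
  intros Ht. rewrite HC by auto. rewrite C0. ring.
Qed.

Definition a2 (n : nat) : R :=
  2 * (match n with O => 0 | S m => uu m end)
  - (match n with O => 0 | S O => 0 | S (S m) => uu m end) + poly2 (1/2) (-1/2) n.

Lemma a2_combo n : a2 n = PS_plus (PS_minus (PS_scal 2 (PS_incr_1 uu)) (PS_incr_1 (PS_incr_1 uu))) (poly2 (1/2) (-1/2)) n.
Proof.
  unfold a2, PS_plus, PS_scal, PS_minus, PS_incr_1.
  change (@plus R_NormedModule) with Rplus.
  change (@scal R_AbsRing R_NormedModule) with Rmult.
  change (@opp R_NormedModule) with Ropp.
  change (@zero R_NormedModule) with 0.
  destruct n as [|[|m]]; ring.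
Qed.

Lemma PSeries_a2 x : Rabs x < 2 -> PSeries a2 x = x * (2 - x) * PSeries uu x + (1/2 - 1/2 * x).
Proof.
  intros Hx. rewrite (PSeries_ext _ _ _ a2_combo).
  rewrite PSeries_plus, PSeries_minus, PSeries_scal, !PSeries_incr_1, PSeries_poly2.
  - field.
  all: apply (R2_ex _ x); [|exact Hx].
  all: pose proof R2_uu; r2.
Qed.

Lemma R2_a2 : R2 a2.
Proof.
  apply (R2_ext _ a2 (fun n => eq_sym (a2_combo n))).
  pose proof R2_uu; r2.
Qed.

Lemma ODE_a2 : ODEc 2 a2.
Proof.
  intros [|[|m]].
  - unfold a2. simpl. field.
  - unfold a2. simpl. field.
  - unfold rr, a2, poly2.
    change (uu (S (S m))) with (INR (S (S m)) / (2 * INR (S (S m)) + 1) * uu (S m)).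
    change (uu (S m)) with (INR (S m) / (2 * INR (S m) + 1) * uu m).
    rewrite !S_INR.
    assert (0 <= INR m) by apply pos_INR.
    field. repeat split; nra.
Qed.

Lemma Inv0 : Inv 0.
Proof.
  exists a2. split; [apply R2_a2|]. split; [|split; [|split]].
  - intros t Ht. replace (0+2)%nat with 2%nat by lia.
    assert (Hom : omega 2 = 2 * PI) by reflexivity.
    rewrite Hom. simpl gk. unfold g2.
    rewrite PSeries_a2.
    2: { rewrite Rabs_right; lra. }
    rewrite theta_eq_V by auto. unfold Vf.
    pose proof PI_RGT_0.
    assert (Hss : sqrt (1 - t^2) * sqrt (1 - t^2) = 1 - t^2) by (apply sqrt_sqrt; nra).
    replace (2 * PI * (/ (2 * PI) * (sqrt (1 - t ^ 2) * PSeries uu (t + 1)) * sqrt (1 - t ^ 2) - / (4 * PI) * t))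
      with ((sqrt (1 - t ^ 2) * sqrt (1 - t ^ 2)) * PSeries uu (t + 1) - t/2) by (field; lra).
    rewrite Hss. field.
  - replace (INR (0+2)) with 2 by (simpl; ring). apply ODE_a2.
  - unfold a2. simpl. lra.
  - intros H. lia.
Qed.

Definition cl (n : nat) : R :=
  match n with O => 0 | S m => - / (INR (S m) * 2 ^ (S m)) end.

Lemma R2_cl : R2 cl.
Proof.
  apply disk_geom_bound. intros [|m].
  - simpl. rewrite Rabs_R0; lra.
  - unfold cl. rewrite Rabs_Ropp, <- Rinv_pow by lra.
    assert (H1 : 1 <= INR (S m)) by (apply (le_INR 1); lia).
    assert (H2 : 0 < 2 ^ S m) by (apply pow_lt; lra).
    rewrite Rabs_right.
    2: { apply Rle_ge, Rlt_le, Rinv_0_lt_compat. nra. }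
    apply Rinv_le_contravar; nra.
Qed.

Lemma PSeries_geom2 x : Rabs x < 2 -> PSeries (fun n => (/2)^n) x = / (1 - x/2).
Proof.
  intros Hx. unfold PSeries. rewrite <- Series_geom.
  - apply Series_ext. intros n. unfold Rdiv. rewrite Rpow_mult_distr.
    change (scal (x ^ n) ((/ 2) ^ n)) with (x^n * (/2)^n). ring.
  - unfold Rdiv. rewrite Rabs_mult, (Rabs_right (/2)) by lra. lra.
Qed.

Lemma PSeries_cl_deriv x : Rabs x < 2 -> PSeries (PS_derive cl) x = - / (2 - x).
Proof.
  intros Hx.
  rewrite (PSeries_ext _ (PS_scal (-/2) (fun n => (/2)^n))).
  - rewrite PSeries_scal, PSeries_geom2 by auto. field.
    apply Rabs_def2 in Hx. lra.
  - intros n. unfold PS_derive, PS_scal, cl.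
    change (scal (- / 2) ((/ 2) ^ n)) with ((-/2) * (/2)^n).
    rewrite <- Rinv_pow by lra. simpl pow.
    assert (0 < INR (S n)) by (apply lt_0_INR; lia).
    assert (0 < 2 ^ n) by (apply pow_lt; lra). field. lra.
Qed.

Lemma PSeries_cl x : Rabs x < 2 -> PSeries cl x = ln (1 - x/2).
Proof.
  intros Hx.
  set (f := fun y => PSeries cl y - ln (1 - y/2)).
  assert (Hd : forall y, Rabs y < 2 -> is_derive f y zero).
  { intros y Hy. unfold f.
    apply Rabs_def2 in Hy; destruct Hy as [Hy1 Hy2].
    assert (H1 := is_derive_PSeries cl y (R2_lt cl y R2_cl ltac:(apply Rabs_def1; lra))).
    rewrite PSeries_cl_deriv in H1 by (apply Rabs_def1; lra).
    assert (H2 : is_derive (fun y => ln (1 - y/2)) y (- / (2 - y))).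
    { auto_derive. lra. field. lra. }
    replace (@zero R_NormedModule) with (- / (2 - y) - - / (2 - y)) by (change (@zero R_NormedModule) with 0; ring).
    apply (is_derive_minus _ _ y _ _ H1 H2). }
  assert (Hf0 : f 0 = 0).
  { unfold f. rewrite PSeries_0. simpl. replace (1 - 0/2) with 1 by field. rewrite ln_1. ring. }
  assert (E : f x = 0).
  { destruct (Rtotal_order 0 x) as [Hlt|[Heq|Hgt]].
    - rewrite <- Hf0. symmetry. apply eq_is_derive; auto.
      intros t Ht. apply Hd. apply Rabs_def2 in Hx; destruct Hx; apply Rabs_def1; lra.
    - subst x. auto.
    - rewrite <- Hf0. apply eq_is_derive; auto.
      intros t Ht. apply Hd. apply Rabs_def2 in Hx; destruct Hx; apply Rabs_def1; lra. }
  unfold f in E. lra.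
Qed.

Definition a3 (n : nat) : R :=
  2 * ((match n with O => 0 | S m => cl m end) - cl n) + poly2 (-2/3) (8/3) n.

Lemma a3_combo n : a3 n = PS_plus (PS_scal 2 (PS_minus (PS_incr_1 cl) cl)) (poly2 (-2/3) (8/3)) n.
Proof.
  unfold a3, PS_plus, PS_scal, PS_minus, PS_incr_1.
  change (@plus R_NormedModule) with Rplus.
  change (@scal R_AbsRing R_NormedModule) with Rmult.
  change (@opp R_NormedModule) with Ropp.
  destruct n; [change (@zero R_NormedModule) with 0|]; ring.
Qed.

Lemma R2_a3 : R2 a3.
Proof.
  apply (R2_ext _ a3 (fun n => eq_sym (a3_combo n))).
  apply R2_plus; [|apply R2_poly2].
  apply R2_scal; [lra|]. apply R2_minus; [apply R2_incr|]; apply R2_cl.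
Qed.

Lemma PSeries_a3 x : Rabs x < 2 -> PSeries a3 x = 2 * (x - 1) * ln (1 - x/2) + (-2/3 + 8/3 * x).
Proof.
  intros Hx. rewrite (PSeries_ext _ _ _ a3_combo).
  rewrite PSeries_plus.
  2: { apply ex_pseries_scal; [apply Rmult_comm|]. apply (R2_ex _ x); auto.
       apply R2_minus; [apply R2_incr|]; apply R2_cl. }
  2: { apply (R2_ex _ x); auto. apply R2_poly2. }
  rewrite PSeries_scal, PSeries_minus.
  2: { apply (R2_ex _ x); auto. apply R2_incr, R2_cl. }
  2: { apply (R2_ex _ x); auto. apply R2_cl. }
  rewrite PSeries_incr_1, PSeries_cl, PSeries_poly2 by auto. ring.
Qed.

Lemma ODE_a3 : ODEc 3 a3.
Proof.
  intros [|[|m]].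
  - unfold a3, cl. simpl. field.
  - unfold a3, cl. simpl. field.
  - unfold rr. unfold a3, poly2, cl.
    rewrite !S_INR. simpl pow.
    assert (0 <= INR m) by apply pos_INR.
    assert (0 < 2 ^ m) by (apply pow_lt; lra).
    field. repeat split; nra.
Qed.

Lemma Inv1 : Inv 1.
Proof.
  exists a3. split; [apply R2_a3|]. split; [|split; [|split]].
  - intros t Ht. replace (1+2)%nat with 3%nat by lia.
    assert (Hom : omega 3 = 4 * PI) by (simpl; field).
    rewrite Hom. simpl gk. unfold g3.
    rewrite PSeries_a3.
    2: { rewrite Rabs_right; lra. }
    replace (1 - t) with (2 * (1 - (t+1)/2)) by field.
    rewrite ln_mult by lra.
    pose proof PI_RGT_0. field. lra.
  - replace (INR (1+2)) with 3 by (simpl; ring). apply ODE_a3.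
  - unfold a3, cl. simpl. lra.
  - intros _. unfold a3, cl. simpl. lra.
Qed.

Lemma Inv_all : Inv 0 -> Inv 1 -> forall i, Inv i.
Proof.
  intros H0 H1.
  assert (H : forall i, Inv i /\ Inv (S i)).
  { induction i as [|i [IH1 IH2]]; split; auto. now apply Inv_step. }
  intros i; apply H.
Qed.

Lemma final_of_Inv : Inv 0 -> Inv 1 -> forall j : nat, (3 <= j)%nat ->
    exists l : R, filterlim (berg j) (at_right (-1)) (locally l) /\ l < 0.
Proof.
  intros H0 H1 j Hj.
  destruct (Inv_all H0 H1 (j-2)) as [a [Ha [Hf [_ [_ Hneg]]]]].
  assert (Hom : 0 < omega (j - 2 + 2)) by (apply omega_pos; lia).
  exists (/ omega (j-2+2) * a O). split.
  - unfold berg.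
    apply (filterlim_ext_loc (fun t => / omega (j-2+2) * PSeries a (t+1))).
    + exists (mkposreal 2 ltac:(lra)). intros t Ht Htp.
      change (Rabs (t - -1) < 2) in Ht. apply Rabs_def2 in Ht.
      rewrite <- Hf by lra. field. lra.
    + apply (filterlim_filter_le_1 _ (@filter_le_within R (locally (-1)) _ (fun u => -1 < u))).
      set (h := fun t => / omega (j-2+2) * PSeries a (t+1)).
      assert (Hc : continuity_pt h (-1)).
      { unfold h. apply continuity_pt_mult; [apply continuity_pt_const; intros ? ?; reflexivity|].
        apply (continuity_pt_comp (fun t => t + 1) (PSeries a)).
        * apply continuity_pt_plus; [apply continuity_pt_id|apply continuity_pt_const; intros ? ?; reflexivity].
        * apply PSeries_continuity. apply R2_lt; auto. replace (-1+1) with 0 by ring.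
          rewrite Rabs_R0; lra. }
      apply continuity_pt_filterlim in Hc.
      assert (Eh : h (-1) = / omega (j-2+2) * a O).
      { unfold h. replace (-1+1) with 0 by ring. now rewrite PSeries_0. }
      rewrite Eh in Hc. exact Hc.
  - assert (a O < 0) by (apply Hneg; lia).
    assert (0 < / omega (j-2+2)) by (apply Rinv_0_lt_compat; lra). nra.
Qed.

Theorem lemma4p6 :
  forall j : nat, (3 <= j)%nat ->
    exists l : R,
      filterlim (berg j) (at_right (-1)) (locally l) /\ l < 0.
Proof.
  exact (final_of_Inv Inv0 Inv1).
Qed.
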